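(* Let $n\ge 2$ and let $\mathrm{Rect}^\ast(n)=\{(a^b):ab=n,\ a,b\ge 2\}$. Then: (1) $\mathrm{Rect}^\ast(n)\cap \mathcal M_n=\varnothing$; (2) if $n$ is even and $n\ge 4$, then $\mathrm{Rect}^\ast(n)\cap \mathcal L_n=\{(n/2,n/2)\}$ and $\mathrm{Rect}^\ast(n)\cap \mathcal R_n=\{(2^{n/2})\}$; if $n=2$ or $n$ is odd, both intersections are empty; (3) $\mathrm{Rect}^\ast(n)\cap Ax_n=\{(a^a)\}$ if $n=a^2$ is a square, and $\mathrm{Rect}^\ast(n)\cap Ax_n=\varnothing$ otherwise; (4) $\mathrm{Rect}^\ast(n)\subset D_2(n)\cap L_2(n)$.
   Context: The partition graph $G_n$ has as vertices the integer partitions of $n$; two partitions are adjacent if one is obtained from the other by a single elementary unit transfer followed by reordering: decrease one part by $1$ and either increase a different part by $1$ or create a new part equal to $1$, then delete a part that became $0$ and sort in nonincreasing order (the result being different from the original). $(a^b)$ denotes $b$ parts equal to $a$. The main chain is $\mathcal M_n=\{(n-k,1^k):0\le k\le n-1\}$; the left edge is $\mathcal L_n=\{(n-k,k):1\le k\le\lfloor n/2\rfloor\}$; the right edge $\mathcal R_n$ is the set of conjugates of the partitions in $\mathcal L_n$ (conjugation = transposing the Ferrers diagram). $Ax_n$ is the set of self-conjugate partitions of $n$. $D_d(n)$ is the set of vertices of $G_n$ of degree $d$. The local simplex dimension of a vertex $v$ is $m-1$ where $m$ is the largest size of a clique of $G_n$ containing $v$; $L_r(n)$ is the set of vertices of local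 simplex dimension $r$. *)

(* Defs.v *)
From mathcomp Require Import all_boot.
Set Implicit Arguments. Unset Strict Implicit. Unset Printing Implicit Defensive.

Definition is_part (n : nat) (s : seq nat) : bool :=
  [&& sorted geq s, all (fun x => 0 < x) s & sumn s == n].

Definition rect (a b : nat) : seq nat := nseq b a.

Definition inRect (n : nat) (s : seq nat) : Prop :=
  exists a b, [/\ a * b = n, 2 <= a, 2 <= b & s = rect a b].

Definition conj_part (s : seq nat) : seq nat :=
  [seq count (fun x => i < x) s | i <- iota 0 (head 0 s)].

Definition inM (n : nat) (s : seq nat) : Prop :=
  exists k, k <= n - 1 /\ s = (n - k) :: nseq k 1.

Definition inLeft (n : nat) (s : seq nat) : Prop :=
  exists k, [/\ 1 <= k, k <= n./2 & s = [:: n - k; k]].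

Definition inRight (n : nat) (s : seq nat) : Prop :=
  exists t, inLeft n t /\ s = conj_part t.

Definition inAx (n : nat) (s : seq nat) : Prop :=
  is_part n s /\ conj_part s = s.

(* One elementary unit transfer from p giving q: decrease part i by 1,
   increase a different part j by 1 (j < size p) or create a new part 1
   (j = size p), delete zero parts, sort nonincreasingly; result differs. *)
Definition transfer (p q : seq nat) : bool :=
  [exists i : 'I_(size p), exists j : 'I_(size p).+1,
    [&& (i : nat) != j, 1 <= nth 0 p i,
        q == sort geq [seq x <- incr_nth (set_nth 0 p i (nth 0 p i).-1) j | 0 < x]
      & q != p]].

Definition adj (p q : seq nat) : bool := transfer p q || transfer q p.

(* Finite encoding of the vertices of G_n: every partition of n has at most
   n parts, each at most n, so it is uniquely encoded by the nonincreasing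
   n-tuple obtained by padding with zeros. *)
Definition code (n : nat) := (n.-tuple 'I_n.+1)%type.

Definition decode (n : nat) (c : code n) : seq nat :=
  [seq x <- map val c | 0 < x].

Definition Vtx (n : nat) : {set code n} :=
  [set c : code n | is_part n (decode c) && sorted geq (map val c)].

Definition degree (n : nat) (s : seq nat) : nat :=
  #|[set c in Vtx n | adj s (decode c)]|.

Definition inD (n d : nat) (s : seq nat) : Prop :=
  is_part n s /\ degree n s = d.

Definition is_clique (n : nat) (K : {set code n}) : Prop :=
  K \subset Vtx n /\
  forall c1 c2, c1 \in K -> c2 \in K -> c1 != c2 -> adj (decode c1) (decode c2).

Definition local_dim (n : nat) (s : seq nat) (r : nat) : Prop :=
  (exists K : {set code n},
      [/\ is_clique K, exists2 c, c \in K & decode c = s & #|K| = r.+1]) /\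
  (forall K : {set code n},
      is_clique K -> (exists2 c, c \in K & decode c = s) -> #|K| <= r.+1).

Definition inLdim (n r : nat) (s : seq nat) : Prop :=
  is_part n s /\ local_dim n s r.

(* Main.v *)
Require Import Defs.
From mathcomp Require Import all_boot zify.
Set Implicit Arguments. Unset Strict Implicit. Unset Printing Implicit Defensive.

Lemma geq_trans : transitive geq.
Proof. by move=> x y z /= h1 h2; exact: leq_trans h2 h1. Qed.
Lemma geq_tot : total geq.
Proof. by move=> x y /=; exact: leq_total. Qed.
Lemma geq_anti : antisymmetric geq.
Proof. move=> x y /andP[h1 h2]; apply/eqP; rewrite eqn_leq; apply/andP; split; [exact: h2 | exact: h1]. Qed.

Definition tr_res (p : seq nat) (i j : nat) :=
  sort geq [seq x <- incr_nth (set_nth 0 p i (nth 0 p i).-1) j | 0 < x].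

Lemma transferE p q : transfer p q <->
  exists i j, [/\ i < size p, j <= size p, i != j, 1 <= nth 0 p i &
                q = tr_res p i j /\ q != p].
Proof.
split.
- case/existsP => i /existsP [j /and4P [Hij H1 /eqP Hq Hne]].
  exists i, j; split => //; try exact: (ltn_ord i); exact: (ltn_ord j).
- case => i [j [Hi Hj Hij H1 [Hq Hne]]].
  apply/existsP; exists (Ordinal Hi); apply/existsP.
  have Hj' : j < (size p).+1 by [].
  exists (Ordinal Hj'); apply/and4P; split => //; by apply/eqP.
Qed.

Lemma perm_pick2 (f : nat -> nat) m i j : i < m -> j < m -> i != j ->
  perm_eq [seq f k | k <- iota 0 m]
          (f i :: f j :: [seq f k | k <- iota 0 m & (k != i) && (k != j)]).
Proof.
move=> Hi Hj Hij.
have -> : f i :: f j :: [seq f k | k <- iota 0 m & (k != i) && (k != j)]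
   = map f (i :: j :: [seq k <- iota 0 m | (k != i) && (k != j)]) by [].
apply: perm_map; apply: uniq_perm.
- exact: iota_uniq.
- rewrite /= inE !mem_filter !negb_and !eqxx /= orbT (negbTE Hij) /=.
  by rewrite filter_uniq ?iota_uniq.
- move=> x; rewrite !inE mem_filter mem_iota /=.
  case: (eqVneq x i) => [->|]; first by rewrite Hi.
  case: (eqVneq x j) => [->|] //=; by rewrite Hj.
Qed.

Lemma perm_pick1 (f : nat -> nat) m i : i < m ->
  perm_eq [seq f k | k <- iota 0 m]
          (f i :: [seq f k | k <- iota 0 m & k != i]).
Proof.
move=> Hi.
have -> : f i :: [seq f k | k <- iota 0 m & k != i]
   = map f (i :: [seq k <- iota 0 m | k != i]) by [].
apply: perm_map; apply: uniq_perm.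
- exact: iota_uniq.
- by rewrite /= mem_filter eqxx /= filter_uniq ?iota_uniq.
- move=> x; rewrite !inE mem_filter mem_iota /=.
  case: (eqVneq x i) => [->|] //=; by rewrite Hi.
Qed.

Lemma seq_iota (s : seq nat) : s = [seq nth 0 s k | k <- iota 0 (size s)].
Proof. by rewrite -[LHS](mkseq_nth 0). Qed.

Definition R2 p i j := [seq nth 0 p k | k <- iota 0 (size p) & (k != i) && (k != j)].
Definition R1 p i := [seq nth 0 p k | k <- iota 0 (size p) & k != i].

Lemma perm_p2 p i j : i < size p -> j < size p -> i != j ->
  perm_eq p (nth 0 p i :: nth 0 p j :: R2 p i j).
Proof. move=> Hi Hj Hij; rewrite {1}[p]seq_iota; exact: perm_pick2. Qed.

Lemma perm_p1 p i : i < size p -> perm_eq p (nth 0 p i :: R1 p i).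
Proof. move=> Hi; rewrite {1}[p]seq_iota; exact: perm_pick1. Qed.

Lemma perm_r2 p i j v : i < size p -> j < size p -> i != j ->
  perm_eq (incr_nth (set_nth 0 p i v) j) (v :: (nth 0 p j).+1 :: R2 p i j).
Proof.
move=> Hi Hj Hij.
set r := incr_nth _ _.
have Hs : size r = size p.
  by rewrite /r size_incr_nth size_set_nth (maxn_idPr Hi) Hj.
rewrite {1}[r]seq_iota Hs.
apply: perm_trans (perm_pick2 _ Hi Hj Hij) _.
rewrite /r !nth_incr_nth !nth_set_nth /= eqxx eq_sym (negbTE Hij) /=.
rewrite !eqxx add0n add1n !perm_cons.
suff -> : [seq nth 0 (incr_nth (set_nth 0 p i v) j) k | k <- iota 0 (size p) & (k != i) && (k != j)] = R2 p i j by [].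
apply/eq_in_map => k; rewrite mem_filter => /andP[/andP[Hki Hkj] _].
by rewrite nth_incr_nth nth_set_nth /= (negbTE Hki) eq_sym (negbTE Hkj).
Qed.

Lemma incr_nth_size s : incr_nth s (size s) = rcons s 1.
Proof. by elim: s => //= x s ->. Qed.

Lemma perm_r1 p i v : i < size p ->
  perm_eq (incr_nth (set_nth 0 p i v) (size p)) (1 :: v :: R1 p i).
Proof.
move=> Hi.
have Hs : size (set_nth 0 p i v) = size p by rewrite size_set_nth (maxn_idPr Hi).
rewrite -{1}Hs incr_nth_size.
rewrite perm_rcons perm_cons.
rewrite {1}[set_nth _ _ _ _]seq_iota Hs.
apply: perm_trans (perm_pick1 _ Hi) _.
rewrite nth_set_nth /= eqxx perm_cons.
suff -> : [seq nth 0 (set_nth 0 p i v) k | k <- iota 0 (size p) & k != i] = R1 p i by [].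
apply/eq_in_map => k; rewrite mem_filter => /andP[Hki _].
by rewrite nth_set_nth /= (negbTE Hki).
Qed.
Definition N1 a b := a.+1 :: nseq (b - 2) a ++ [:: a.-1].
Definition N2 a b := nseq (b - 1) a ++ [:: a.-1; 1].

Lemma path_nseq_cat a m t : path geq a t -> path geq a (nseq m a ++ t).
Proof. by elim: m => //= m IH H; rewrite leqnn IH. Qed.

Lemma sorted_N1 a b : sorted geq (N1 a b).
Proof.
rewrite /N1 /=; case: (b - 2) => [|m] /=; first by rewrite andbT; lia.
by rewrite leqnSn path_nseq_cat //= andbT; lia.
Qed.

Lemma sorted_N2 a b : 2 <= a -> 1 <= b -> sorted geq (N2 a b).
Proof.
move=> Ha Hb; rewrite /N2; case: b Hb => // b _; rewrite subSS subn0 /=.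
case: b => [|m] /=; first by rewrite andbT; lia.
rewrite path_nseq_cat //= andbT; apply/andP; split; lia.
Qed.

Lemma sort_perm_eq s t : sorted geq t -> perm_eq s t -> sort geq s = t.
Proof.
move=> Ht Hp; rewrite -[RHS](sorted_sort geq_trans Ht).
by apply/(perm_sortP geq_tot geq_trans geq_anti).
Qed.

Lemma sorted_perm_eq s t : sorted geq s -> sorted geq t -> perm_eq s t -> s = t.
Proof.
move=> Hs Ht Hp; rewrite -(sorted_sort geq_trans Hs); exact: sort_perm_eq.
Qed.

Lemma rest2 (a b x y : nat) (R : seq nat) : perm_eq (nseq b a) (x :: y :: R) ->
  [/\ x = a, y = a & R = nseq (b - 2) a].
Proof.
move=> H; have := perm_all (pred1 a) H; rewrite all_pred1_nseq /=.
move/esym/and3P => [/eqP -> /eqP -> /all_pred1P HR]; split => //.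
by rewrite HR; have := perm_size H; rewrite size_nseq /= => ->; rewrite subSS subn1.
Qed.

Lemma rest1 (a b x : nat) (R : seq nat) : perm_eq (nseq b a) (x :: R) ->
  x = a /\ R = nseq (b - 1) a.
Proof.
move=> H; have := perm_all (pred1 a) H; rewrite all_pred1_nseq /=.
move/esym/andP => [/eqP -> /all_pred1P HR]; split => //.
by rewrite HR; have := perm_size H; rewrite size_nseq /= => ->; rewrite subn1.
Qed.

Lemma fwd a b i j : 2 <= a -> i < b -> j <= b -> i != j ->
  tr_res (nseq b a) i j = if j < b then N1 a b else N2 a b.
Proof.
move=> Ha Hi Hj Hij; rewrite /tr_res nth_nseq Hi.
have Hs : size (nseq b a) = b by rewrite size_nseq.
case: ltnP => Hjb.
- have Hi' : i < size (nseq b a) by rewrite Hs.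
  have Hj' : j < size (nseq b a) by rewrite Hs.
  have P1 := perm_r2 a.-1 Hi' Hj' Hij.
  have [_ _ ER] := rest2 (perm_p2 Hi' Hj' Hij).
  rewrite nth_nseq Hjb ER in P1.
  apply: sort_perm_eq; first exact: sorted_N1.
  apply: perm_trans (perm_filter _ P1) _.
  rewrite /= filter_nseq; have -> : 0 < a.-1 by lia.
  have -> : 0 < a by lia.
  rewrite /= mul1n /N1; apply/permP => P /=; rewrite count_cat /=; lia.
- have Hb : j = b by apply/eqP; rewrite eqn_leq Hj Hjb.
  subst j.
  have Hi' : i < size (nseq b a) by rewrite Hs.
  have P1 := perm_r1 a.-1 Hi'.
  have [_ ER] := rest1 (perm_p1 Hi').
  rewrite ER Hs in P1.
  apply: sort_perm_eq; first by apply: sorted_N2 => //; lia.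
  apply: perm_trans (perm_filter _ P1) _.
  rewrite /= filter_nseq; have -> : 0 < a.-1 by lia.
  have -> : 0 < a by lia.
  rewrite /= mul1n /N2; apply/permP => P /=; rewrite count_cat /=; lia.
Qed.

Lemma bwd a b q i j : 2 <= a -> sorted geq q -> all (fun x => 0 < x) q ->
  i < size q -> j <= size q -> i != j -> 1 <= nth 0 q i ->
  nseq b a = tr_res q i j -> q = N1 a b \/ q = N2 a b.
Proof.
move=> Ha Hsq Hpos Hi Hj Hij H1 E.
set v := (nth 0 q i).-1.
set r := incr_nth (set_nth 0 q i v) j.
have Hp : perm_eq (nseq b a) [seq x <- r | 0 < x].
  by rewrite E /tr_res perm_sort.
case: (ltnP j (size q)) => Hjb.
- have P1 := perm_r2 v Hi Hjb Hij.
  have P2 := perm_p2 Hi Hjb Hij.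
  have HR : all (fun x => 0 < x) (R2 q i j).
    by have := perm_all (fun x => 0 < x) P2; rewrite Hpos /= => /esym/and3P[].
  have P3 := perm_trans Hp (perm_filter (fun x => 0 < x) P1).
  rewrite /= (all_filterP HR) in P3.
  case: (posnP v) => Hv; rewrite ?Hv /= in P3.
  + have [Ha' ER] := rest1 P3.
    right; apply: sorted_perm_eq => //; first apply: sorted_N2 => //.
      by have := perm_size P3; rewrite size_nseq /= => ->.
    apply: perm_trans P2 _; rewrite ER.
    have -> : nth 0 q i = 1 by rewrite /v in Hv; lia.
    have -> : nth 0 q j = a.-1 by lia.
    rewrite /N2; apply/permP => P /=; rewrite count_cat /=; lia.
  + have Hv' : 0 < v by lia.
    rewrite ?Hv' in P3.
    have [Ha1 Ha2 ER] := rest2 P3.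
    left; apply: sorted_perm_eq => //; first exact: sorted_N1.
    apply: perm_trans P2 _; rewrite ER.
    have -> : nth 0 q i = a.+1 by rewrite /v in Ha1; lia.
    have -> : nth 0 q j = a.-1 by lia.
    rewrite /N1; apply/permP => P /=; rewrite count_cat /=; lia.
- have Hb : j = size q by apply/eqP; rewrite eqn_leq Hj Hjb.
  subst j.
  have P1 := perm_r1 v Hi.
  have P3 := perm_trans Hp (perm_filter (fun x => 0 < x) P1).
  have := perm_all (pred1 a) P3; rewrite all_pred1_nseq /= => /esym/andP[/eqP Ha1 _].
  lia.
Qed.

Lemma adj_char a b q : 2 <= a -> 2 <= b -> sorted geq q -> all (fun x => 0 < x) q ->
  adj (nseq b a) q = (q == N1 a b) || (q == N2 a b).
Proof.
move=> Ha Hb Hsq Hpos; apply/idP/idP.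
- case/orP => /transferE [i [j [Hi Hj Hij H1 [Hq _]]]].
  + rewrite size_nseq in Hi Hj; rewrite Hq fwd //; case: ifP => _; by rewrite eqxx ?orbT.
  + by case: (bwd Ha Hsq Hpos Hi Hj Hij H1 Hq) => ->; rewrite eqxx ?orbT.
- case/orP => /eqP ->; apply/orP; left; apply/transferE.
  + exists 0, 1; rewrite size_nseq; split => //; try lia.
    * rewrite nth_nseq (_ : 0 < b); lia.
    split; first by rewrite fwd // ?Hb //; lia.
    case: b Hb => // b _; rewrite /N1 /=; apply/negP => /eqP [] ; lia.
  + exists 0, b; rewrite size_nseq; split => //; try lia.
    * rewrite nth_nseq (_ : 0 < b); lia.
    split; first by rewrite fwd // ?ltnn //; lia.
    apply/negP => /eqP /(congr1 size); rewrite /N2 size_cat !size_nseq /=; lia.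
Qed.

Lemma trN1N2 a b : 2 <= a -> 2 <= b -> transfer (N1 a b) (N2 a b).
Proof.
move=> Ha Hb; apply/transferE.
have Hs : size (N1 a b) = b by rewrite /N1 /= size_cat size_nseq /=; lia.
exists 0, b; rewrite Hs; split => //; try lia.
split; last first.
  apply/negP => /eqP /(congr1 (fun s => count (pred1 1) s)).
  rewrite /N1 /N2 /= !count_cat !count_nseq /=; lia.
rewrite /tr_res /=.
have Hsz : size (a :: nseq (b - 2) a ++ [:: a.-1]) = b by rewrite /= size_cat size_nseq /=; lia.
rewrite -[X in incr_nth _ X]Hsz incr_nth_size.
apply/esym/sort_perm_eq; first by apply: sorted_N2; lia.
rewrite /= -cats1 filter_cat /=.
have -> : 0 < a by lia.
rewrite filter_cat filter_nseq /=.
have -> : 0 < a by lia.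
have -> : 0 < a.-1 by lia.
rewrite /= mul1n /N2; apply/permP => P /=; rewrite !count_cat /=.
rewrite !count_nseq (_ : b - 1 = (b - 2).+1); last lia.
rewrite mulnS; lia.
Qed.

Lemma pos_bounds q : all (fun x => 0 < x) q -> size q <= sumn q /\ all (fun x => x <= sumn q) q.
Proof.
elim: q => //= x q IH /andP[Hx Hq]; have [H1 H2] := IH Hq; split; first lia.
apply/andP; split; first lia.
apply/allP => y Hy; have := allP H2 y Hy; lia.
Qed.

Definition enc n (q : seq nat) : code n := [tuple (inord (nth 0 q k) : 'I_n.+1) | k < n].

Lemma map_val_enc n q : size q <= n -> all (fun x => x <= n) q ->
  map val (enc n q) = q ++ nseq (n - size q) 0.
Proof.
move=> Hs Ha; apply: (@eq_from_nth _ 0).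
  by rewrite size_map size_tuple size_cat size_nseq; lia.
move=> k; rewrite size_map size_tuple => Hk.
rewrite (nth_map ord0) ?size_tuple //.
have := nth_mktuple (fun k : 'I_n => (inord (nth 0 q k) : 'I_n.+1)) ord0 (Ordinal Hk).
rewrite /enc /= => ->; rewrite inordK; last first.
  case: (ltnP k (size q)) => Hkq; last by rewrite nth_default.
  have /= := allP Ha _ (mem_nth 0 Hkq); lia.
rewrite nth_cat; case: ltnP => // Hkq; rewrite nth_default // nth_nseq; by case: ifP.
Qed.

Lemma pathz0 y m : path geq y (nseq m 0).
Proof. by elim: m y => //= m IH y; rewrite IH andbT. Qed.

Lemma sorted_pad q m : sorted geq q -> sorted geq (q ++ nseq m 0).
Proof.
case: q => [|x s] /=; first by move=> _; case: m => //= m; exact: pathz0.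
by rewrite cat_path pathz0 andbT.
Qed.

Lemma enc_ok n q : is_part n q -> enc n q \in Vtx n /\ decode (enc n q) = q.
Proof.
move=> Hp; have Hp' := Hp; case/and3P: Hp' => Hs Hpos /eqP Hsum.
have [B1 B2] := pos_bounds Hpos; rewrite Hsum in B1 B2.
have Hd : decode (enc n q) = q.
  rewrite /decode map_val_enc // filter_cat filter_nseq /= cats0.
  exact/all_filterP.
split => //; rewrite inE Hd Hp /= map_val_enc //; exact: sorted_pad.
Qed.

Lemma sorted_split s : sorted geq s ->
  s = [seq x <- s | 0 < x] ++ nseq (size s - size [seq x <- s | 0 < x]) 0.
Proof.
elim: s => //= x s IH Hs.
have Hs' : sorted geq s := path_sorted Hs.
case: x Hs => [|x] Hs.
- have := order_path_min geq_trans Hs => H0.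
  have Hz : all (pred1 0) s by apply/allP => y Hy; have := allP H0 y Hy => /=; case: y {Hy}.
  move/all_pred1P: (Hz) => Es.
  have -> : [seq x <- s | 0 < x] = [::] by rewrite Es filter_nseq.
  by rewrite /= {1}Es.
- rewrite /= subSS; congr (_ :: _); exact: IH.
Qed.

Lemma Vtx_inj n (c c' : code n) : c \in Vtx n -> c' \in Vtx n -> decode c = decode c' -> c = c'.
Proof.
rewrite !inE => /andP[_ S] /andP[_ S'] E.
have H1 : forall d : code n, sorted geq (map val d) ->
    map val d = decode d ++ nseq (n - size (decode d)) 0.
  by move=> d Sd; rewrite {1}(sorted_split Sd) size_map size_tuple.
apply: val_inj; apply: (inj_map val_inj).
by rewrite (H1 c S) (H1 c' S') E.
Qed.

Lemma sorted_nseq a b : sorted geq (nseq b a).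
Proof. case: b => //= b; have := @path_nseq_cat a b [::]; rewrite cats0; exact. Qed.

Lemma part_nseq a b : 1 <= a -> is_part (a * b) (nseq b a).
Proof.
move=> Ha; apply/and3P; split; first exact: sorted_nseq.
  by rewrite all_nseq Ha orbT.
by rewrite sumn_nseq.
Qed.

Lemma part_N1 a b : 2 <= a -> 2 <= b -> is_part (a * b) (N1 a b).
Proof.
move=> Ha Hb; apply/and3P; split; first exact: sorted_N1.
  rewrite /N1 /= all_cat all_nseq /=; apply/and3P; split => //; lia.
rewrite /N1 /= sumn_cat sumn_nseq /=; apply/eqP; rewrite (_ : b = (b - 2).+2) 1?{3}(_ : b = (b - 2).+2); try lia.
Qed.

Lemma part_N2 a b : 2 <= a -> 2 <= b -> is_part (a * b) (N2 a b).
Proof.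
move=> Ha Hb; apply/and3P; split; first by apply: sorted_N2; lia.
  rewrite /N2 /= all_cat all_nseq /= andbT; apply/andP; split; [apply/orP; right|]; lia.
rewrite /N2 /= sumn_cat sumn_nseq /=; apply/eqP; rewrite (_ : b = (b - 1).+1) 1?{3}(_ : b = (b - 1).+1); try lia.
Qed.

Lemma adj_sym p q : adj p q = adj q p.
Proof. by rewrite /adj orbC. Qed.

Lemma part4 n a b : 2 <= a -> 2 <= b -> n = a * b ->
  inD n 2 (nseq b a) /\ inLdim n 2 (nseq b a).
Proof.
move=> Ha Hb ->.
set s := nseq b a.
have Ps : is_part (a * b) s by apply: part_nseq; lia.
have Ps1 := part_N1 Ha Hb.
have Ps2 := part_N2 Ha Hb.
have [V0 D0] := enc_ok Ps.
have [V1 D1] := enc_ok Ps1.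
have [V2 D2] := enc_ok Ps2.
set e0 := enc (a * b) s in V0 D0 *.
set e1 := enc (a * b) (N1 a b) in V1 D1 *.
set e2 := enc (a * b) (N2 a b) in V2 D2 *.
have Hadj : forall c, c \in Vtx (a * b) -> adj s (decode c) = (c == e1) || (c == e2).
  move=> c Vc; have Pc : is_part (a * b) (decode c) by move: Vc; rewrite inE => /andP[].
  case/and3P: Pc => S P _; rewrite adj_char //.
  congr orb; apply/eqP/eqP => [E|->]; try (by rewrite ?D1 ?D2);
    apply: Vtx_inj => //; by rewrite ?D1 ?D2.
have sz1 : size (N1 a b) = b by rewrite /N1 /= size_cat size_nseq /=; lia.
have sz2 : size (N2 a b) = b.+1 by rewrite /N2 /= size_cat size_nseq /=; lia.
have h1 : head 0 (N1 a b) = a.+1 by [].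
have h0 : head 0 s = a by rewrite /s; case: (b) Hb.
have E12 : e1 != e2.
  by apply/negP => /eqP E; have := congr1 (fun c => size (decode c)) E; rewrite /= D1 D2 sz1 sz2; lia.
have E01 : e0 != e1.
  by apply/negP => /eqP E; have := congr1 (fun c => head 0 (decode c)) E; rewrite /= D0 D1 h0 h1; lia.
have E02 : e0 != e2.
  by apply/negP => /eqP E; have := congr1 (fun c => size (decode c)) E; rewrite /= D0 D2 sz2 size_nseq; lia.
have A1 : adj s (N1 a b) by rewrite -D1 Hadj // eqxx.
have A2 : adj s (N2 a b) by rewrite -D2 Hadj // eqxx orbT.
have A12 : adj (N1 a b) (N2 a b) by rewrite /adj trN1N2.
split.
- split => //; rewrite /degree.
  have -> : [set c in Vtx (a * b) | adj s (decode c)] = [set e1; e2].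
    apply/setP => c; rewrite in_set in_set2; case Vc: (c \in Vtx _) => /=; first by rewrite Hadj.
    apply/esym/negbTE/negP => /orP[] /eqP E; by rewrite E ?V1 ?V2 in Vc.
  by rewrite cards2 E12.
- split => //; split.
  + exists (e0 |: [set e1; e2]); split.
    * split.
        by apply/subsetP => x /setU1P[->|/set2P[]->].
      move=> c1 c2 /setU1P[->|/set2P[]->] /setU1P[->|/set2P[]->]; rewrite ?eqxx // => _;
        rewrite ?D0 ?D1 ?D2 // adj_sym //.
    * by exists e0; rewrite ?setU11.
    * have H : e0 \notin [set e1; e2].
        by apply/negP => /set2P[] E; [move: E01 | move: E02]; rewrite E eqxx.
      by rewrite cardsU1 cards2 E12 H.
  + move=> K [KV Kc] [c cK Dc].
    apply: leq_trans (subset_leq_card (_ : K \subset c |: [set e1; e2])) _.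
      apply/subsetP => x xK; case: (eqVneq x c) => [->|Hxc]; first exact: setU11.
      apply/setU1P; right; apply/set2P.
      have := Kc c x cK xK; rewrite eq_sym Hxc Dc Hadj; last exact: (subsetP KV).
      by move=> /(_ isT) /orP[] /eqP ->; [left|right].
    by rewrite cardsU1 cards2; case: (_ \notin _); case: (_ != _).
Qed.

Lemma conj_nseq a b : 0 < b -> conj_part (nseq b a) = nseq a b.
Proof.
case: b => // b _; rewrite /conj_part /=.
apply: (@eq_from_nth _ 0); first by rewrite size_map size_iota size_nseq.
move=> i; rewrite size_map size_iota => Hi.
rewrite (nth_map 0) ?size_iota // nth_iota // nth_nseq Hi add0n /=.
by rewrite count_nseq /= Hi mul1n add1n.
Qed.

Lemma nth_conj2 m k i : i < m -> nth 0 (conj_part [:: m; k]) i = (i < m) + (i < k).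
Proof.
move=> Hi; rewrite /conj_part /= (nth_map 0) ?size_iota // nth_iota // add0n /=.
by rewrite addn0.
Qed.

Lemma size_conj2 m k : size (conj_part [:: m; k]) = m.
Proof. by rewrite /conj_part size_map size_iota. Qed.

Lemma right_rect n a b k : 2 <= a -> 2 <= b -> 1 <= k -> k <= n./2 ->
  nseq b a = conj_part [:: n - k; k] -> [/\ a = 2, b = n - k & n = k * 2].
Proof.
move=> Ha Hb Hk1 Hk2 E.
have Hs : b = n - k by rewrite -(size_nseq b a) E size_conj2.
have Hnk : 0 < n - k by lia.
have E0 : a = 2.
  have := congr1 (fun s => nth 0 s 0) E; rewrite nth_nseq nth_conj2 // (_ : 0 < b); last by rewrite Hs.
  by move=> ->; rewrite Hnk Hk1.
have E1 : a = 1 + ((n - k).-1 < k).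
  have := congr1 (fun s => nth 0 s (n - k).-1) E.
  have L : (n - k).-1 < n - k by rewrite prednK.
  rewrite nth_nseq nth_conj2 // (_ : (n - k).-1 < b); last by rewrite Hs.
  by move=> ->; rewrite L.
split => //.
move: E1; rewrite E0; case: ltnP => // H _.
have H2 : k * 2 <= n by lia.
lia.
Qed.

Theorem proposition3p9 (n : nat) (hn : 2 <= n) :
  (* (1) *)
  (forall s, ~ (inRect n s /\ inM n s)) /\
  (* (2) *)
  ((~~ odd n /\ 4 <= n) ->
     (forall s, inRect n s /\ inLeft n s <-> s = [:: n./2; n./2]) /\
     (forall s, inRect n s /\ inRight n s <-> s = nseq n./2 2)) /\
  ((n = 2 \/ odd n) ->
     (forall s, ~ (inRect n s /\ inLeft n s)) /\
     (forall s, ~ (inRect n s /\ inRight n s))) /\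
  (* (3) *)
  (forall a, n = a * a ->
     forall s, inRect n s /\ inAx n s <-> s = nseq a a) /\
  ((~ exists a, n = a * a) -> forall s, ~ (inRect n s /\ inAx n s)) /\
  (* (4) *)
  (forall s, inRect n s -> inD n 2 s /\ inLdim n 2 s).
Proof.
have left_an : forall s a b k, a * b = n -> 2 <= a -> 2 <= b -> s = rect a b ->
    s = [:: n - k; k] -> b = 2 /\ a = k /\ n = k * 2.
  move=> s a b k Hab Ha Hb -> E.
  have Hb2 : b = 2 by have := congr1 size E; rewrite size_nseq.
  subst b; case: E => E1 E2; subst a; split => //; split => //; lia.
have ax_an : forall s a b, a * b = n -> 2 <= a -> 2 <= b -> s = rect a b ->
    inAx n s -> a = b.
  move=> s a b Hab Ha Hb -> [_ E]; move: E; rewrite /rect conj_nseq; last lia.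
  by move/(congr1 size); rewrite !size_nseq.
split; last split; last split; last split; last split.
- move=> s [[a [b [Hab Ha Hb Es]]] [k [Hk E]]].
  have Hsz : b = k.+1 by have := congr1 size E; rewrite Es size_nseq /= size_nseq.
  have := congr1 (fun s => nth 0 s 1) E; rewrite Es /rect nth_nseq /= nth_nseq.
  rewrite (_ : 1 < b); last lia.
  rewrite (_ : 0 < k); last lia.
  lia.
- move=> [Hev H4]; split => s; split.
  + move=> [[a [b [Hab Ha Hb Es]]] [k [Hk1 Hk2 E]]].
    have [Hb2 [Hak Hn]] := left_an s a b k Hab Ha Hb Es E.
    rewrite E; have -> : n./2 = k by lia.
    by have -> : n - k = k by lia.
  + move=> ->; split.
    * exists n./2, 2; split => //; lia.
    * exists n./2; split => //; try lia; by have -> : n - n./2 = n./2 by lia.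
  + move=> [[a [b [Hab Ha Hb Es]]] [t [[k [Hk1 Hk2 Et]] E]]].
    subst t; rewrite Es /rect in E.
    have [Ha2 Hbk Hnk] := right_rect Ha Hb Hk1 Hk2 E.
    rewrite Es /rect Ha2 Hbk; congr nseq; lia.
  + move=> ->; split.
    * exists 2, n./2; split => //; lia.
    * exists [:: n./2; n./2]; split.
        exists n./2; split => //; try lia; by have -> : n - n./2 = n./2 by lia.
      by rewrite (_ : [:: n./2; n./2] = nseq 2 n./2) // conj_nseq.
- move=> Hno; split => s.
  + move=> [[a [b [Hab Ha Hb Es]]] [k [Hk1 Hk2 E]]].
    have [Hb2 [Hak Hn]] := left_an s a b k Hab Ha Hb Es E.
    case: Hno => [Hn2|Ho]; lia.
  + move=> [[a [b [Hab Ha Hb Es]]] [t [[k [Hk1 Hk2 Et]] E]]].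
    subst t; rewrite Es /rect in E.
    have [Ha2 Hbk Hnk] := right_rect Ha Hb Hk1 Hk2 E.
    case: Hno => [Hn2|Ho]; lia.
- move=> c Hc s; split.
  + move=> [[a [b [Hab Ha Hb Es]]] Hax].
    have Eab := ax_an s a b Hab Ha Hb Es Hax.
    subst b; rewrite Es /rect; have -> : a = c by nia.
    done.
  + move=> ->.
    have Hc2 : 2 <= c by nia.
    split.
    * exists c, c; split => //; lia.
    * split; first by rewrite Hc; apply: part_nseq; lia.
      by rewrite conj_nseq //; lia.
- move=> Hns s [[a [b [Hab Ha Hb Es]]] Hax].
  have Eab := ax_an s a b Hab Ha Hb Es Hax.
  by apply: Hns; exists a; rewrite -Hab Eab.
- move=> s [a [b [Hab Ha Hb ->]]]; rewrite /rect; exact: part4.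
Qed.
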